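(* Let $(X,d)$ be a compact metric space with $\operatorname{diam}(X,d)=1/2$ and let $\mathcal S$ be its hyperbolic filling with horizontal parameter $\lambda>1$ and vertical parameter $a>1$. (a) If $(z,n+1)$ is a child of $(x,n)$, then $d(x,z)<a^{-n}$. If $(y,k)$ is a descendant of $(x,n)$ (for some $k>n$), then $d(x,y)<\frac{a}{a-1}a^{-n}$. (b) If $\lambda\ge2+2\lambda a^{-1}$ and $D_2((x,n+1),(y,n+1))\le1$, then $D_2((x_0,n),(y_0,n))\le1$, where $(x_0,n),(y_0,n)$ are the parents of $(x,n+1),(y,n+1)$. Similarly, if $\lambda\ge2+4\lambda a^{-1}$ and $D_2((x,n+1),(y,n+1))\le2$, then $D_2((x_0,n),(y_0,n))\le1$. (c) Let $\lambda\ge6$. If $(x,n+1),(y,n+1)\in\mathcal S_{n+1}$ satisfy $d(x,y)\le4a^{-n}$ and $(x_0,n),(y_0,n)$ are their parents, then $D_2((x_0,n),(y_0,n))\le1$. (d) If $\lambda>1+a^{-1}$, then $D_1\le D_2\le2D_1$. (e) Let $\lambda>1+a^{-1}$. If $w\in\mathcal S_{n+1}$ and $u,v\in\mathcal S_n$ satisfy $D_1(u,w)=1$ and $D_2(v,w)=1$, then $D_2(u,v)\le1$.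
   Context: Hyperbolic filling: fix an increasing sequence $X_0\subset X_1\subset\cdots$ with each $X_n$ a maximal $a^{-n}$-separated subset of $X$ (distinct points at distance $\ge a^{-n}$, maximal for inclusion). $\mathcal S_n=\{(x,n):x\in X_n\}$, $\mathcal S=\bigcup_{n\ge0}\mathcal S_n$. For each $(x,n)$ with $n\ge1$ a parent $(y,n-1)\in\mathcal S_{n-1}$ is fixed with $d(x,y)=\min_{z\in X_{n-1}}d(x,z)$; $(x,n)$ is then a child of $(y,n-1)$; $(x,n)$ is a descendant of $(y,k)$, $n>k$, if they are linked by a chain of parent–child relations. $D_1$ is the graph distance of the graph on $\mathcal S$ where distinct $(x,n),(y,m)$ are adjacent iff either $n=m$ and $B(x,\lambda a^{-n})\cap B(y,\lambda a^{-n})\ne\emptyset$, or $|n-m|=1$ and $B(x,a^{-n})\cap B(y,a^{-m})\ne\emptyset$. $D_2$ is the graph distance of the graph on $\mathcal S$ whose edges are the parent–child pairs and the pairs of distinct $(x,n),(y,n)$ with $B(x,\lambda a^{-n})\cap B(y,\lambda a^{-n})\neq\emptyset$. *)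

(* Defs.v *)
From Stdlib Require Import Reals Lra Lia List ClassicalEpsilon.
Open Scope R_scope.

Section Defs.
Context {T : Type}.

Definition is_metric (d : T -> T -> R) : Prop :=
  (forall x y, d x y = 0 <-> x = y) /\
  (forall x y, d x y = d y x) /\
  (forall x y z, d x z <= d x y + d y z).

Definition open_in (d : T -> T -> R) (U : T -> Prop) : Prop :=
  forall x, U x -> exists r, 0 < r /\ forall y, d x y < r -> U y.

Definition compact_metric (d : T -> T -> R) : Prop :=
  forall (I : Type) (U : I -> T -> Prop),
    (forall i, open_in d (U i)) -> (forall x, exists i, U i x) ->
    exists l : list I, forall x, exists i, In i l /\ U i x.

Definition is_diam (d : T -> T -> R) (D : R) : Prop :=
  is_lub (fun r => exists x y, r = d x y) D.

Definition separated (d : T -> T -> R) (r : R) (A : T -> Prop) : Prop :=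
  forall x y, A x -> A y -> x <> y -> r <= d x y.

Definition max_separated (d : T -> T -> R) (r : R) (A : T -> Prop) : Prop :=
  separated d r A /\
  forall B : T -> Prop, separated d r B -> (forall x, A x -> B x) ->
    forall x, B x -> A x.

(* Xs n = X_n ; par n x = the chosen parent (in X_n) of (x, n+1) *)
Definition is_filling (d : T -> T -> R) (a : R) (Xs : nat -> T -> Prop)
    (par : nat -> T -> T) : Prop :=
  (forall n x, Xs n x -> Xs (S n) x) /\
  (forall n, max_separated d (/ a ^ n) (Xs n)) /\
  (forall n x, Xs (S n) x ->
     Xs n (par n x) /\ forall z, Xs n z -> d x (par n x) <= d x z).

Definition vert (Xs : nat -> T -> Prop) (u : T * nat) : Prop :=
  Xs (snd u) (fst u).

Definition balls_meet (d : T -> T -> R) (x : T) (r : R) (y : T) (s : R) : Prop :=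
  exists z, d x z < r /\ d y z < s.

Definition child (Xs : nat -> T -> Prop) (par : nat -> T -> T)
    (n : nat) (x z : T) : Prop :=
  Xs n x /\ Xs (S n) z /\ par n z = x.

(* ancestor at level n of a point y of level n + j *)
Fixpoint anc (par : nat -> T -> T) (n j : nat) (y : T) : T :=
  match j with
  | O => y
  | S j' => anc par n j' (par (n + j')%nat y)
  end.

Definition descendant (Xs : nat -> T -> Prop) (par : nat -> T -> T)
    (n : nat) (x : T) (k : nat) (y : T) : Prop :=
  (n < k)%nat /\ Xs n x /\ Xs k y /\ anc par n (k - n) y = x.

Definition edge1 (d : T -> T -> R) (lam a : R) (Xs : nat -> T -> Prop)
    (u v : T * nat) : Prop :=
  vert Xs u /\ vert Xs v /\ u <> v /\
  ( (snd u = snd v /\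
       balls_meet d (fst u) (lam / a ^ snd u) (fst v) (lam / a ^ snd v))
  \/ ((snd u = S (snd v) \/ snd v = S (snd u)) /\
       balls_meet d (fst u) (/ a ^ snd u) (fst v) (/ a ^ snd v)) ).

Definition edge2 (d : T -> T -> R) (lam a : R) (Xs : nat -> T -> Prop)
    (par : nat -> T -> T) (u v : T * nat) : Prop :=
  vert Xs u /\ vert Xs v /\ u <> v /\
  ( (snd v = S (snd u) /\ par (snd u) (fst v) = fst u)
  \/ (snd u = S (snd v) /\ par (snd v) (fst u) = fst v)
  \/ (snd u = snd v /\
       balls_meet d (fst u) (lam / a ^ snd u) (fst v) (lam / a ^ snd v)) ).

End Defs.

Inductive walk {V : Type} (E : V -> V -> Prop) : nat -> V -> V -> Prop :=
  | walk0 : forall u, walk E 0 u u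
  | walkS : forall k u w v, E u w -> walk E k w v -> walk E (S k) u v.

(* graph distance: the least length of a walk from u to v
   (unspecified if v is unreachable from u; the fillings' graphs are connected) *)
Definition gdist {V : Type} (E : V -> V -> Prop) (u v : V) : nat :=
  epsilon (inhabits 0%nat)
    (fun k => walk E k u v /\ forall j, walk E j u v -> (k <= j)%nat).

(* Main.v *)
Require Import Defs.
From Stdlib Require Import Reals Lra Lia Psatz Classical Arith Wf_nat ClassicalEpsilon.
Open Scope R_scope.

Lemma walk_app {V : Type} (E : V -> V -> Prop) j k u w v :
  walk E j u w -> walk E k w v -> walk E (j + k) u v.
Proof. induction 1; intros; simpl; auto. econstructor; eauto. Qed.

Lemma walk_snoc {V : Type} (E : V -> V -> Prop) k u w v :
  walk E k u w -> E w v -> walk E (S k) u v.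
Proof. intros H1 H2. replace (S k) with (k + 1)%nat by lia.
  apply walk_app with w; auto. econstructor; eauto. constructor. Qed.

Lemma walk_sym {V : Type} (E : V -> V -> Prop) k u v :
  (forall x y, E x y -> E y x) -> walk E k u v -> walk E k v u.
Proof. intros Hs H; induction H. constructor. apply walk_snoc with w; auto. Qed.

Lemma walk_mono {V : Type} (E F : V -> V -> Prop) k u v :
  (forall x y, E x y -> F x y) -> walk E k u v -> walk F k u v.
Proof. intros Hs H; induction H. constructor. econstructor; eauto. Qed.

Lemma walk_min {V : Type} (E : V -> V -> Prop) u v n :
  walk E n u v -> exists k, walk E k u v /\ forall j, walk E j u v -> (k <= j)%nat.
Proof.
  induction n as [n IH] using lt_wf_ind. intros H.
  destruct (classic (exists j, (j < n)%nat /\ walk E j u v)) as [[j [Hj Hw]]|Hn].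
  - exact (IH j Hj Hw).
  - exists n. split; auto. intros j Hj. destruct (Nat.lt_ge_cases j n); auto.
    exfalso; apply Hn; eauto.
Qed.

Lemma gdist_spec {V : Type} (E : V -> V -> Prop) u v n :
  walk E n u v -> walk E (gdist E u v) u v /\
    forall j, walk E j u v -> (gdist E u v <= j)%nat.
Proof.
  intros H. unfold gdist. apply epsilon_spec. exact (walk_min E u v n H).
Qed.

Lemma gdist_le {V : Type} (E : V -> V -> Prop) u v n :
  walk E n u v -> (gdist E u v <= n)%nat.
Proof. intros H. apply (proj2 (gdist_spec E u v n H)); auto. Qed.

Lemma gdist_walk {V : Type} (E : V -> V -> Prop) u v n :
  walk E n u v -> walk E (gdist E u v) u v.
Proof. intros H. apply (proj1 (gdist_spec E u v n H)). Qed.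

Lemma walk0_eq {V : Type} (E : V -> V -> Prop) u v : walk E 0 u v -> u = v.
Proof. intros H; inversion H; auto. Qed.

Lemma walk1_edge {V : Type} (E : V -> V -> Prop) u v : walk E 1 u v -> E u v.
Proof. intros H; inversion H; subst. inversion H2; subst; auto. Qed.

Lemma walk2_edge {V : Type} (E : V -> V -> Prop) u v : walk E 2 u v ->
  exists w, E u w /\ E w v.
Proof. intros H; inversion H; subst. exists w. split; auto. apply walk1_edge; auto. Qed.

Lemma walk1 {V : Type} (E : V -> V -> Prop) u v : E u v -> walk E 1 u v.
Proof. intros; econstructor; eauto; constructor. Qed.

Section S.
Lemma dxx {T} (d : T -> T -> R) : is_metric d -> forall x, d x x = 0.
Proof. intros [H _] x. apply (proj2 (H x x)); auto. Qed.
Lemma dsym {T} (d : T -> T -> R) : is_metric d -> forall x y, d x y = d y x.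
Proof. intros [_ [H _]]; auto. Qed.
Lemma dtri {T} (d : T -> T -> R) : is_metric d -> forall x y z, d x z <= d x y + d y z.
Proof. intros [_ [_ H]]; auto. Qed.
End S.

Lemma ipow_pos a n : 1 < a -> 0 < / a ^ n.
Proof. intros; apply Rinv_0_lt_compat, pow_lt; lra. Qed.

Lemma ipow_S a n : 1 < a -> / a ^ S n = / a ^ n * / a.
Proof. intros. simpl. rewrite Rinv_mult. ring. Qed.

Lemma near {T} (d : T -> T -> R) a Xs par : is_metric d -> 1 < a ->
  is_filling d a Xs par -> forall n z, exists w, Xs n w /\ d z w < / a ^ n.
Proof.
  intros Hm Ha Hf n z.
  destruct (classic (exists w, Xs n w /\ d z w < / a ^ n)) as [H|H]; auto. exfalso.
  destruct Hf as [_ [Hmax _]]. destruct (Hmax n) as [Hsep Hmx].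
  assert (Xs n z).
  { apply (Hmx (fun t => Xs n t \/ t = z)).
    - intros x y [Hx|Hx] [Hy|Hy] Hxy.
      + apply Hsep; auto.
      + subst y. apply Rnot_lt_le. intro. apply H. exists x. split; auto.
        rewrite (dsym d Hm); auto.
      + subst x. apply Rnot_lt_le; intro; apply H; exists y; auto.
      + subst; contradiction.
    - auto.
    - right; auto. }
  apply H. exists z. split; auto. rewrite (dxx d Hm). apply ipow_pos; auto.
Qed.

Lemma par_in {T} (d : T -> T -> R) a Xs par : is_filling d a Xs par ->
  forall n z, Xs (S n) z -> Xs n (par n z).
Proof. intros [_ [_ Hp]] n z H. apply (Hp n z H). Qed.

Lemma par_min {T} (d : T -> T -> R) a Xs par : is_filling d a Xs par ->
  forall n z w, Xs (S n) z -> Xs n w -> d z (par n z) <= d z w.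
Proof. intros [_ [_ Hp]] n z w H Hw. apply (Hp n z H); auto. Qed.

Lemma child_lt {T} (d : T -> T -> R) a Xs par : is_metric d -> 1 < a ->
  is_filling d a Xs par -> forall n z, Xs (S n) z -> d z (par n z) < / a ^ n.
Proof.
  intros Hm Ha Hf n z H. destruct (near d a Xs par Hm Ha Hf n z) as [w [Hw Hd]].
  pose proof (par_min d a Xs par Hf n z w H Hw). lra.
Qed.

Lemma anc_bound {T} (d : T -> T -> R) a Xs par : is_metric d -> 1 < a ->
  is_filling d a Xs par -> forall n j y, Xs (n + j)%nat y ->
  Xs n (anc par n j y) /\
  d (anc par n j y) y <= a / (a - 1) * (/ a ^ n - / a ^ (n + j)).
Proof.
  intros Hm Ha Hf n j. induction j as [|j IH]; intros y Hy.
  - simpl. rewrite Nat.add_0_r in *. rewrite (dxx d Hm). split; auto. lra.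
  - simpl. rewrite Nat.add_succ_r in Hy.
    pose proof (par_in d a Xs par Hf _ _ Hy) as Hp.
    destruct (IH _ Hp) as [H1 H2]. split; auto.
    pose proof (child_lt d a Xs par Hm Ha Hf _ _ Hy) as Hc.
    pose proof (dtri d Hm (anc par n j (par (n + j)%nat y)) (par (n + j)%nat y) y).
    rewrite (dsym d Hm (par (n+j)%nat y) y) in H.
    rewrite Nat.add_succ_r, ipow_S by lra.
    assert (a / (a - 1) * (/ a ^ n - / a ^ (n + j) * / a) =
            a / (a - 1) * (/ a ^ n - / a ^ (n + j)) + / a ^ (n + j)).
    { field. repeat split; try lra; apply pow_nonzero; lra. }
    lra.
Qed.

Lemma root_uniq {T} (d : T -> T -> R) a Xs par : 1 < a ->
  is_filling d a Xs par -> is_diam d (1/2) -> forall x y, Xs 0%nat x -> Xs 0%nat y -> x = y.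
Proof.
  intros Ha Hf Hd x y Hx Hy. apply NNPP; intro Hn.
  destruct Hf as [_ [Hmax _]]. destruct (Hmax 0%nat) as [Hsep _].
  pose proof (Hsep x y Hx Hy Hn). simpl in H. rewrite Rinv_1 in H.
  destruct Hd as [Hub _]. assert (d x y <= 1/2) by (apply Hub; eauto). lra.
Qed.

Lemma bm_sym {T} (d : T -> T -> R) x r y s : is_metric d ->
  balls_meet d x r y s -> balls_meet d y s x r.
Proof. intros Hm [z [H1 H2]]. exists z; auto. Qed.

Lemma bm_lt {T} (d : T -> T -> R) x r y s : is_metric d ->
  balls_meet d x r y s -> d x y < r + s.
Proof. intros Hm [z [H1 H2]]. pose proof (dtri d Hm x z y).
  rewrite (dsym d Hm z y) in H. lra. Qed.

Lemma edge2_sym {T} (d : T -> T -> R) lam a Xs par : is_metric d ->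
  forall u v, edge2 d lam a Xs par u v -> edge2 d lam a Xs par v u.
Proof.
  intros Hm u v [H1 [H2 [H3 H4]]]. repeat split; auto.
  destruct H4 as [H4|[H4|[H4 H5]]]; auto. right; right; split; auto.
  apply bm_sym; auto.
Qed.

Lemma edge1_sym {T} (d : T -> T -> R) lam a Xs : is_metric d ->
  forall u v, edge1 d lam a Xs u v -> edge1 d lam a Xs v u.
Proof.
  intros Hm u v [H1 [H2 [H3 H4]]]. repeat split; auto.
  destruct H4 as [[H4 H5]|[H4 H5]].
  - left; split; auto; apply bm_sym; auto.
  - right; split; [tauto|]; apply bm_sym; auto.
Qed.

Lemma up_walk {T} (d : T -> T -> R) lam a Xs par : is_filling d a Xs par ->
  forall n x, Xs n x -> exists r, Xs 0%nat r /\ walk (edge2 d lam a Xs par) n (x, n) (r, 0%nat).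
Proof.
  intros Hf n. induction n as [|n IH]; intros x Hx.
  - exists x; split; auto. constructor.
  - pose proof (par_in d a Xs par Hf _ _ Hx).
    destruct (IH _ H) as [r [Hr Hw]]. exists r; split; auto.
    econstructor; [|exact Hw]. unfold edge2, vert; simpl. repeat split; auto.
    intro E; inversion E; lia.
Qed.

Lemma conn2 {T} (d : T -> T -> R) lam a Xs par : is_metric d -> 1 < a ->
  is_filling d a Xs par -> is_diam d (1/2) ->
  forall u v, vert Xs u -> vert Xs v -> exists k, walk (edge2 d lam a Xs par) k u v.
Proof.
  intros Hm Ha Hf Hd [x n] [y m] Hu Hv. unfold vert in *; simpl in *.
  destruct (up_walk d lam a Xs par Hf n x Hu) as [r [Hr Hw]].
  destruct (up_walk d lam a Xs par Hf m y Hv) as [r' [Hr' Hw']].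
  rewrite (root_uniq d a Xs par Ha Hf Hd r r' Hr Hr') in Hw.
  exists (n + m)%nat. apply walk_app with (r', 0%nat); auto.
  apply walk_sym; auto. apply edge2_sym; auto.
Qed.

Lemma e2e1 {T} (d : T -> T -> R) lam a Xs par : is_metric d -> 1 < a ->
  is_filling d a Xs par ->
  forall u v, edge2 d lam a Xs par u v -> edge1 d lam a Xs u v.
Proof.
  intros Hm Ha Hf [x n] [y m] [H1 [H2 [H3 H4]]]. unfold vert in *; simpl in *.
  repeat split; auto.
  destruct H4 as [[H4 H5]|[[H4 H5]|H4]]; simpl in *; auto.
  - right. split; auto. subst. exists y. split.
    + rewrite (dsym d Hm). apply (child_lt d a Xs par Hm Ha Hf); auto.
    + rewrite (dxx d Hm). apply ipow_pos; auto.
  - right. split; auto. subst. exists x. split.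
    + rewrite (dxx d Hm). apply ipow_pos; auto.
    + rewrite (dsym d Hm); apply (child_lt d a Xs par Hm Ha Hf); auto.
Qed.

Lemma conn1 {T} (d : T -> T -> R) lam a Xs par : is_metric d -> 1 < a ->
  is_filling d a Xs par -> is_diam d (1/2) ->
  forall u v, vert Xs u -> vert Xs v -> exists k, walk (edge1 d lam a Xs) k u v.
Proof.
  intros Hm Ha Hf Hd u v Hu Hv.
  destruct (conn2 d lam a Xs par Hm Ha Hf Hd u v Hu Hv) as [k Hk].
  exists k. apply walk_mono with (edge2 d lam a Xs par); auto.
  apply e2e1; auto.
Qed.

Lemma vert_short {T} (d : T -> T -> R) lam a Xs par : is_metric d -> 1 < a ->
  is_filling d a Xs par -> lam > 1 + / a ->
  forall n x y, Xs (S n) x -> Xs n y ->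
  balls_meet d x (/ a ^ S n) y (/ a ^ n) ->
  exists j, (j <= 2)%nat /\ walk (edge2 d lam a Xs par) j (x, S n) (y, n).
Proof.
  intros Hm Ha Hf Hl n x y Hx Hy Hb.
  pose proof (bm_lt d _ _ _ _ Hm Hb) as Hxy.
  pose proof (par_min d a Xs par Hf n x y Hx Hy) as Hmin.
  pose proof (par_in d a Xs par Hf n x Hx) as Hp.
  rewrite ipow_S in Hxy by lra.
  pose proof (ipow_pos a n Ha) as Hq.
  assert (Hlt : / a ^ n * / a + / a ^ n < lam / a ^ n).
  { unfold Rdiv. assert (0 < (lam - 1 - / a) * / a ^ n) by (apply Rmult_lt_0_compat; lra). nra. }
  destruct (classic (par n x = y)) as [E|E].
  - exists 1%nat; split; auto. apply walk1. unfold edge2, vert; simpl.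
    repeat split; auto. intro Q; inversion Q; lia.
  - exists 2%nat; split; auto. econstructor.
    2: apply walk1.
    + instantiate (1 := (par n x, n)). unfold edge2, vert; simpl.
      repeat split; auto. intro Q; inversion Q; lia.
    + unfold edge2, vert; simpl. repeat split; auto.
      intro Q; inversion Q; auto.
      right; right; split; auto. exists x. split.
      * rewrite (dsym d Hm). lra.
      * rewrite (dsym d Hm). lra.
Qed.

Lemma e1_short {T} (d : T -> T -> R) lam a Xs par : is_metric d -> 1 < a ->
  is_filling d a Xs par -> lam > 1 + / a ->
  forall u v, edge1 d lam a Xs u v ->
  exists j, (j <= 2)%nat /\ walk (edge2 d lam a Xs par) j u v.
Proof.
  intros Hm Ha Hf Hl [x n] [y m] [H1 [H2 [H3 H4]]]. unfold vert in *; simpl in *.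
  destruct H4 as [[H4 H5]|[[H4|H4] H5]].
  - exists 1%nat; split; auto. apply walk1. repeat split; auto.
  - subst n. apply vert_short; auto.
  - subst m. destruct (vert_short d lam a Xs par Hm Ha Hf Hl n y x H2 H1 (bm_sym d _ _ _ _ Hm H5)) as [j [Hj Hw]].
    exists j; split; auto. apply walk_sym; auto. apply edge2_sym; auto.
Qed.

Lemma e1_walk {T} (d : T -> T -> R) lam a Xs par : is_metric d -> 1 < a ->
  is_filling d a Xs par -> lam > 1 + / a ->
  forall k u v, walk (edge1 d lam a Xs) k u v ->
  exists j, (j <= 2 * k)%nat /\ walk (edge2 d lam a Xs par) j u v.
Proof.
  intros Hm Ha Hf Hl k u v H. induction H.
  - exists 0%nat; split; auto. constructor.
  - destruct (e1_short d lam a Xs par Hm Ha Hf Hl u w H) as [j1 [Hj1 Hw1]].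
    destruct IHwalk as [j2 [Hj2 Hw2]].
    exists (j1 + j2)%nat; split; [lia|]. apply walk_app with w; auto.
Qed.

Lemma core {T} (d : T -> T -> R) lam a Xs par : is_metric d -> 1 < a ->
  is_filling d a Xs par -> 1 < lam ->
  forall n x y, Xs (S n) x -> Xs (S n) y ->
  d x y + 2 * / a ^ n <= lam * / a ^ n ->
  (gdist (edge2 d lam a Xs par) (par n x, n) (par n y, n) <= 1)%nat.
Proof.
  intros Hm Ha Hf Hl n x y Hx Hy Hd.
  destruct (classic (par n x = par n y)) as [E|E].
  - rewrite E. apply le_S. apply gdist_le. constructor.
  - apply gdist_le. apply walk1. unfold edge2, vert; simpl.
    repeat split; try (apply (par_in d a Xs par Hf); auto).
    intro Q; inversion Q; auto.
    right; right; split; auto. exists (par n x). split.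
    + rewrite (dxx d Hm). unfold Rdiv. pose proof (ipow_pos a n Ha). nra.
    + pose proof (child_lt d a Xs par Hm Ha Hf n x Hx).
      pose proof (child_lt d a Xs par Hm Ha Hf n y Hy).
      pose proof (dtri d Hm (par n y) y (par n x)).
      pose proof (dtri d Hm y x (par n x)).
      rewrite (dsym d Hm (par n y) y) in *. rewrite (dsym d Hm y x) in *.
      unfold Rdiv. lra.
Qed.

Theorem lemma2p4 (T : Type) (d : T -> T -> R) (lam a : R)
  (Xs : nat -> T -> Prop) (par : nat -> T -> T) :
  is_metric d -> compact_metric d -> is_diam d (1/2) ->
  1 < lam -> 1 < a -> is_filling d a Xs par ->
  let D1 := gdist (edge1 d lam a Xs) in
  let D2 := gdist (edge2 d lam a Xs par) in
  (* (a) *)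
  ((forall n x z, child Xs par n x z -> d x z < / a ^ n) /\
   (forall n x k y, descendant Xs par n x k y ->
      d x y < a / (a - 1) * / a ^ n)) /\
  (* (b) *)
  ((lam >= 2 + 2 * lam / a ->
     forall n x y, Xs (S n) x -> Xs (S n) y ->
       (D2 (x, S n) (y, S n) <= 1)%nat ->
       (D2 (par n x, n) (par n y, n) <= 1)%nat) /\
   (lam >= 2 + 4 * lam / a ->
     forall n x y, Xs (S n) x -> Xs (S n) y ->
       (D2 (x, S n) (y, S n) <= 2)%nat ->
       (D2 (par n x, n) (par n y, n) <= 1)%nat)) /\
  (* (c) *)
  (lam >= 6 ->
     forall n x y, Xs (S n) x -> Xs (S n) y -> d x y <= 4 / a ^ n ->
       (D2 (par n x, n) (par n y, n) <= 1)%nat) /\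
  (* (d) *)
  (lam > 1 + / a ->
     forall u v, vert Xs u -> vert Xs v ->
       (D1 u v <= D2 u v)%nat /\ (D2 u v <= 2 * D1 u v)%nat) /\
  (* (e) *)
  (lam > 1 + / a ->
     forall n w u v, vert Xs (w, S n) -> vert Xs (u, n) -> vert Xs (v, n) ->
       D1 (u, n) (w, S n) = 1%nat -> D2 (v, n) (w, S n) = 1%nat ->
       (D2 (u, n) (v, n) <= 1)%nat).
Proof.
  intros Hm Hc Hd Hl Ha Hf. cbv zeta.
  set (E1 := edge1 d lam a Xs). set (E2 := edge2 d lam a Xs par).
  assert (Ha1 : 0 < / a) by (apply Rinv_0_lt_compat; lra).
  assert (Heq : forall n x y, par n x = par n y -> (gdist E2 (par n x, n) (par n y, n) <= 1)%nat).
  { intros n x y ->. apply le_S, gdist_le. constructor. }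
  assert (Hwk : forall u v k, vert Xs u -> vert Xs v -> (gdist E2 u v <= k)%nat ->
             exists j, (j <= k)%nat /\ walk E2 j u v).
  { intros u v k Hu Hv Hk. destruct (conn2 d lam a Xs par Hm Ha Hf Hd u v Hu Hv) as [j Hj].
    exists (gdist E2 u v). split; auto. eapply gdist_walk; eauto. }
  assert (Hone : forall n x y, walk E2 1 (x, S n) (y, S n) ->
             d x y < 2 * lam * / a ^ n * / a).
  { intros n x y H. apply walk1_edge in H. destruct H as [_ [_ [_ H]]]. cbn [fst snd] in H.
    destruct H as [[H _]|[[H _]|[_ H]]]; try lia.
    apply bm_lt in H; auto. unfold Rdiv in H. rewrite ipow_S in H by lra. lra. }
  split; [split|split; [split|split; [|split]]].
  - intros n x z [Hx [Hz Hp]]. subst x. rewrite (dsym d Hm).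
    apply (child_lt d a Xs par Hm Ha Hf); auto.
  - intros n x k y [Hnk [Hx [Hy Hanc]]].
    assert (Hk : k = (n + (k - n))%nat) by lia. rewrite Hk in Hy.
    destruct (anc_bound d a Xs par Hm Ha Hf n (k - n) y Hy) as [_ Hb].
    rewrite Hanc in Hb.
    pose proof (ipow_pos a (n + (k - n)) Ha).
    assert (0 < a / (a - 1)) by (apply Rdiv_lt_0_compat; lra).
    assert (a / (a - 1) * (/ a ^ n - / a ^ (n + (k - n))) < a / (a - 1) * / a ^ n).
    { apply Rmult_lt_compat_l; lra. }
    lra.
  - intros Hb n x y Hx Hy H1.
    destruct (Hwk (x, S n) (y, S n) 1%nat Hx Hy H1) as [j [Hj Hw]].
    destruct j as [|[|j]]; [| |lia].
    + apply walk0_eq in Hw. inversion Hw. apply Heq; congruence.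
    + apply Hone in Hw. apply (core d lam a Xs par Hm Ha Hf Hl n x y Hx Hy).
      pose proof (ipow_pos a n Ha). unfold Rdiv in Hb.
      assert (lam * / a ^ n >= (2 + 2 * lam * / a) * / a ^ n)
        by (apply Rmult_ge_compat_r; lra). nra.
  - intros Hb n x y Hx Hy H1.
    destruct (Hwk (x, S n) (y, S n) 2%nat Hx Hy H1) as [j [Hj Hw]].
    pose proof (ipow_pos a n Ha). unfold Rdiv in Hb.
    assert (Hb' : lam * / a ^ n >= (2 + 4 * lam * / a) * / a ^ n)
        by (apply Rmult_ge_compat_r; lra).
    assert (0 < lam * / a * / a ^ n) by (repeat apply Rmult_lt_0_compat; lra).
    destruct j as [|[|[|j]]]; [| | |lia].
    + apply walk0_eq in Hw. inversion Hw. apply Heq; congruence.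
    + apply Hone in Hw. apply (core d lam a Xs par Hm Ha Hf Hl n x y Hx Hy). nra.
    + apply walk2_edge in Hw. destruct Hw as [[z m] [He1 He2]].
      destruct He1 as [_ [Hz [_ He1]]]. destruct He2 as [_ [_ [_ He2]]].
      unfold vert in Hz; cbn [fst snd] in *.
      destruct He1 as [[H3 H4]|[[H3 H4]|[H3 H4]]];
      destruct He2 as [[H5 H6]|[[H5 H6]|[H5 H6]]]; try lia.
      * subst m. apply Heq. congruence.
      * inversion H3; subst m. apply Heq. congruence.
      * subst m. apply (core d lam a Xs par Hm Ha Hf Hl n x y Hx Hy).
        apply bm_lt in H4; auto. apply bm_lt in H6; auto.
        pose proof (dtri d Hm x z y).
        unfold Rdiv in H4, H6. rewrite ipow_S in H4, H6 by lra. nra.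
  - intros H6 n x y Hx Hy Hxy. apply (core d lam a Xs par Hm Ha Hf Hl n x y Hx Hy).
    pose proof (ipow_pos a n Ha). unfold Rdiv in Hxy.
    assert (lam * / a ^ n >= 6 * / a ^ n) by (apply Rmult_ge_compat_r; lra). lra.
  - intros Hl' u v Hu Hv.
    destruct (conn2 d lam a Xs par Hm Ha Hf Hd u v Hu Hv) as [j Hj].
    pose proof (gdist_walk _ _ _ _ Hj) as H2.
    destruct (conn1 d lam a Xs par Hm Ha Hf Hd u v Hu Hv) as [j' Hj'].
    pose proof (gdist_walk _ _ _ _ Hj') as H1.
    split.
    + apply gdist_le. apply walk_mono with E2; auto. apply e2e1; auto.
    + destruct (e1_walk d lam a Xs par Hm Ha Hf Hl' _ _ _ H1) as [k [Hk Hw]].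
      pose proof (gdist_le _ _ _ _ Hw). unfold E1, E2 in *. lia.
  - intros Hl' n w u v Hw Hu Hv H1 H2. unfold E1, E2 in *.
    destruct (conn1 d lam a Xs par Hm Ha Hf Hd _ _ Hu Hw) as [j' Hj'].
    pose proof (gdist_walk _ _ _ _ Hj') as W1. rewrite H1 in W1.
    destruct (conn2 d lam a Xs par Hm Ha Hf Hd _ _ Hv Hw) as [j Hj].
    pose proof (gdist_walk _ _ _ _ Hj) as W2. rewrite H2 in W2.
    apply walk1_edge in W1. apply walk1_edge in W2.
    destruct W1 as [_ [_ [_ W1]]]. destruct W2 as [_ [_ [_ W2]]]. cbn [fst snd] in *.
    unfold vert in *; cbn [fst snd] in *.
    destruct W1 as [[W1 _]|[_ W1]]; [lia|].
    destruct W2 as [[_ W2]|[[W2 _]|[W2 _]]]; try lia.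
    destruct (classic (u = v)) as [E|E].
    + rewrite E. apply le_S, gdist_le. constructor.
    + apply gdist_le. apply walk1. unfold E2, edge2, vert; simpl.
      repeat split; auto. intro Q; inversion Q; auto.
      right; right; split; auto. exists w.
      apply bm_lt in W1; auto. rewrite ipow_S in W1 by lra.
      pose proof (par_min d a Xs par Hf n w u Hw Hu). rewrite W2 in H.
      pose proof (ipow_pos a n Ha).
      assert (0 < (lam - 1 - / a) * / a ^ n) by (apply Rmult_lt_0_compat; lra).
      unfold Rdiv. rewrite (dsym d Hm v w). rewrite (dsym d Hm w u) in H. split; lra.
Qed.
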